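(* For non-negative integers $m$ and $n$, \[ \overline{{ m+n \brack n }}_{q,t} = \sum_{ p \in \mathcal{D}_{m,n}} t^{d(p)} q^{wt(p)}. \]
   Context: An overpartition is a partition in which the last occurrence of each distinct part size may be overlined; its weight $|\lambda|$ is the sum of its parts. $\overline{{m+n \brack n}}_{q,t}=\sum_{\lambda} t^{\#_o(\lambda)} q^{|\lambda|}$, the sum over all overpartitions $\lambda$ with largest part at most $m$ and at most $n$ parts, $\#_o(\lambda)$ being the number of overlined parts. $\mathcal{D}_{m,n}$ is the set of lattice paths from $(0,0)$ to $(m,n)$ using steps from $(i,j)$ to $(i+1,j)$ (East), $(i,j+1)$ (North) or $(i+1,j+1)$ (North-East). The weight of a step from $(i,j)$ is $0$ for an East step, $i$ for a North step, and $i+1$ for a North-East step; $wt(p)$ is the sum of the weights of the steps of $p$, and $d(p)$ is the number of North-East steps of $p$. *)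

(* Defs.v *)
From HB Require Import structures.
From mathcomp Require Import all_boot all_order all_algebra.
Set Implicit Arguments. Unset Strict Implicit. Unset Printing Implicit Defensive.
Import GRing.Theory.
Local Open Scope ring_scope.

(* An overpartition with largest part <= m and at most n parts is encoded as
   a pair (s, O):
   - s : n.-tuple 'I_(m+1), weakly decreasing; its nonzero entries are the
     parts (zeros are padding), so there are at most n parts, each <= m;
   - O : {set 'I_(m+1)} a subset of the distinct (nonzero) part sizes of s,
     namely the sizes whose last occurrence is overlined. *)
Definition is_partition_tuple (m n : nat) (s : n.-tuple 'I_m.+1) : bool :=
  sorted (fun a b : 'I_m.+1 => (b <= a)%N) s.

Definition part_sizes (m n : nat) (s : n.-tuple 'I_m.+1) : {set 'I_m.+1} :=
  [set x in s | (0 < x)%N].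

Definition overpartition_weight (m n : nat) (s : n.-tuple 'I_m.+1) : nat :=
  sumn [seq val x | x <- s].

Definition overbinom (R : comRingType) (m n : nat) (q t : R) : R :=
  \sum_(s : n.-tuple 'I_m.+1 | is_partition_tuple s)
    \sum_(O : {set 'I_m.+1} | O \subset part_sizes s)
      t ^+ #|O| * q ^+ overpartition_weight s.

Inductive step := East | North | NorthEast.

Definition step_to_ord (x : step) : 'I_3 :=
  match x with East => inord 0 | North => inord 1 | NorthEast => inord 2 end.
Definition ord_to_step (i : 'I_3) : step :=
  match val i with 0 => East | 1 => North | _ => NorthEast end.
Lemma step_to_ordK : cancel step_to_ord ord_to_step.
Proof. by case; rewrite /ord_to_step /= inordK. Qed.

HB.instance Definition _ := Equality.copy step (can_type step_to_ordK).
HB.instance Definition _ := Choice.copy step (can_type step_to_ordK).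
HB.instance Definition _ := Countable.copy step (can_type step_to_ordK).
HB.instance Definition _ := Finite.copy step (can_type step_to_ordK).

Definition path_end (p : seq step) : nat * nat :=
  (count (fun x => (x == East) || (x == NorthEast)) p,
   count (fun x => (x == North) || (x == NorthEast)) p).

(* weight of a path whose current x-coordinate is i:
   East step weight 0, North step from (i,j) weight i,
   NorthEast step from (i,j) weight i+1 *)
Fixpoint wt_from (i : nat) (p : seq step) : nat :=
  match p with
  | [::] => 0
  | East :: p' => wt_from i.+1 p'
  | North :: p' => i + wt_from i p'
  | NorthEast :: p' => i.+1 + wt_from i.+1 p'
  end.

Definition wt (p : seq step) : nat := wt_from 0 p.

Definition dNE (p : seq step) : nat := count (pred1 NorthEast) p.

(* sum over D_{m,n}: every path in D_{m,n} has length between 0 and m+n *)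
Definition path_sum (R : comRingType) (m n : nat) (q t : R) : R :=
  \sum_(k < (m + n).+1)
    \sum_(p : k.-tuple step | path_end p == (m, n))
      t ^+ dNE p * q ^+ wt p.

(* Main.v *)
Require Import Defs.
From mathcomp Require Import all_boot all_order all_algebra.
From mathcomp Require Import ring zify.
Set Implicit Arguments. Unset Strict Implicit. Unset Printing Implicit Defensive.
Import GRing.Theory.
Local Open Scope ring_scope.
Lemma subset_sum (R : comRingType) (T : finType) (A : {set T}) (t : R) :
  \sum_(O : {set T} | O \subset A) t ^+ #|O| = (1 + t) ^+ #|A|.
Proof.
rewrite addrC exprD1n.
rewrite (partition_big (fun O : {set T} => (inord #|O| : 'I_(#|A|.+1))) predT) //=.
apply: eq_bigr => k _.
rewrite (eq_bigr (fun _ => t ^+ k)); last first.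
  move=> O /andP[sOA /eqP <-]; rewrite inordK // ltnS subset_leq_card //.
rewrite sumr_const -cards_draws; congr (_ *+ _).
apply: eq_card => O; rewrite inE unfold_in /=.
case sOA: (O \subset A) => //=.
apply/eqP/eqP => [<-|->]; first by rewrite inordK // ltnS subset_leq_card.
by apply: val_inj; rewrite /= inordK // ltn_ord.
Qed.

Section TS.
Variable R : comRingType.

Fixpoint tsum (T : finType) (n : nat) (G : seq T -> R) : R :=
  match n with
  | 0 => G [::]
  | n'.+1 => \sum_(x : T) tsum n' (fun s => G (x :: s))
  end.

Lemma tsumE (T : finType) n (G : seq T -> R) :
  \sum_(s : n.-tuple T) G s = tsum n G.
Proof.
elim: n G => [|n IH] G /=.
  rewrite (big_pred1 [tuple]) // => s; symmetry; apply/eqP; exact: tuple0.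
rewrite -(eq_bigr _ (fun x _ => IH (fun s => G (x :: s)))) pair_big /=.
rewrite (reindex (fun p : T * n.-tuple T => [tuple of p.1 :: p.2])) //=.
apply: onW_bij.
exists (fun s : n.+1.-tuple T => (thead s, [tuple of behead s])).
  by case=> x s /=; congr pair; apply: val_inj.
by move=> s; rewrite /= [in RHS](tuple_eta s).
Qed.

Lemma tsum_ext (T : finType) n (G G' : seq T -> R) :
  G =1 G' -> tsum n G = tsum n G'.
Proof.
elim: n G G' => [|n IH] G G' e /=; first exact: e.
by apply: eq_bigr => x _; apply: IH => s.
Qed.

Lemma tsumD (T : finType) n (G G' : seq T -> R) :
  tsum n (fun s => G s + G' s) = tsum n G + tsum n G'.
Proof.
elim: n G G' => [|n IH] G G' //=.
by rewrite -big_split /=; apply: eq_bigr => x _; rewrite IH.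
Qed.

Lemma tsumZ (T : finType) n c (G : seq T -> R) :
  tsum n (fun s => c * G s) = c * tsum n G.
Proof.
elim: n G => [|n IH] G //=.
by rewrite mulr_sumr; apply: eq_bigr => x _; rewrite IH.
Qed.

Lemma tsum0 (T : finType) n (G : seq T -> R) :
  (forall s, size s = n -> G s = 0) -> tsum n G = 0.
Proof.
elim: n G => [|n IH] G H /=; first exact: H.
by rewrite big1 // => x _; apply: IH => s hs; apply: H; rewrite /= hs.
Qed.

Lemma tsum_rcons (T : finType) n (G : seq T -> R) :
  tsum n.+1 G = \sum_(x : T) tsum n (fun s => G (rcons s x)).
Proof.
elim: n G => [|n IH] G //=.
rewrite (eq_bigr _ (fun y _ => IH (fun s => G (y :: s)))) exchange_big /=.
by apply: eq_bigr => x _; apply: eq_bigr.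
Qed.


Definition cnt (l : seq nat) : nat := size (undup [seq x <- l | (0 < x)%N]).
Definition sd (l : seq nat) : bool := sorted (fun a b => (b <= a)%N) l.

Lemma card_ps m n (s : n.-tuple 'I_m.+1) : #|part_sizes s| = cnt (map val s).
Proof.
rewrite /part_sizes /cnt.
have -> : [set x in s | (0 < x)%N] = [set x : 'I_m.+1 in filter (fun y : 'I_m.+1 => (0 < y)%N) s].
  by apply/setP => x; rewrite !inE mem_filter andbC.
rewrite cardsE -(eq_card (mem_undup _)).
rewrite (card_uniqP (undup_uniq _)).
by rewrite filter_map undup_map_inj ?size_map //; apply: val_inj.
Qed.

Lemma overbinomE m n (q t : R) :
  overbinom m n q t = tsum n (fun s : seq 'I_m.+1 =>
     let l := map val s in if sd l then q ^+ sumn l * (1 + t) ^+ cnt l else 0).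
Proof.
rewrite /overbinom -tsumE big_mkcond /=; apply: eq_bigr => s _.
rewrite /is_partition_tuple /sd sorted_map.
case: ifP => _ //.
rewrite -mulr_suml subset_sum card_ps mulrC.
by [].
Qed.

End TS.

Section OSide.
Variable R : comRingType.
Variables q t : R.

Definition boxsum m n (G : seq nat -> R) : R :=
  tsum n (fun s : seq 'I_m.+1 => G (map val s)).

Lemma boxsumS m n G :
  boxsum m n.+1 G = \sum_(0 <= x < m.+1) boxsum m n (fun l => G (x :: l)).
Proof. by rewrite /boxsum /= big_mkord. Qed.

Lemma cnt_cons x r : cnt (x :: r) = (((0 < x) && (x \notin r)) + cnt r)%N.
Proof.
rewrite /cnt /=; case: (ltnP 0 x) => hx //=.
by rewrite mem_filter hx /=; case: (x \in r).
Qed.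

Lemma cnt_cons2 x y l : sd (y :: l) -> (y <= x)%N ->
  cnt (x :: y :: l) = (((0 < x) && (x != y)) + cnt (y :: l))%N.
Proof.
move=> hs hyx; rewrite cnt_cons in_cons negb_or.
have ha : all (fun z => z <= y)%N l.
  by apply: (order_path_min _ hs) => a b c hba hcb; exact: leq_trans hcb hba.
case: eqP => [-> //|hne] /=.
suff -> : x \notin l by [].
apply/negP => hxl; move/allP: ha => /(_ x hxl) hxy; apply: hne.
by apply/eqP; rewrite eqn_leq hxy hyx.
Qed.

Fixpoint Tf (k x : nat) : R :=
  match k with
  | 0 => (1 + t) ^+ (0 < x)%N
  | k'.+1 => \sum_(0 <= y < x.+1) q ^+ y * (1 + t) ^+ ((0 < x)%N && (x != y)) * Tf k' y
  end.

Definition Bf (m n : nat) : R :=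
  match n with
  | 0 => 1
  | n'.+1 => \sum_(0 <= x < m.+1) q ^+ x * Tf n' x
  end.

Lemma boxT m k : forall x, (x <= m)%N ->
  boxsum m k (fun l => if sd (x :: l) then q ^+ sumn l * (1 + t) ^+ cnt (x :: l) else 0)
  = Tf k x.
Proof.
elim: k => [|k IH] x hxm.
  rewrite /boxsum /= /sd /= expr0 mul1r /cnt /=.
  by case: (ltnP 0 x).
rewrite boxsumS /= (@big_cat_nat _ _ _ x.+1) //= [X in _ + X]big_nat_cond [X in _ + X]big1; last first.
  move=> y  /andP[/andP[hy _] _]; apply: tsum0 => s _.
  by rewrite /sd /= leqNgt hy.
rewrite addr0; apply: eq_big_nat => y /andP[_ hyx].
rewrite -mulrA -(IH y (leq_trans (hyx : y <= x)%N hxm)) /boxsum -tsumZ -tsumZ.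
apply: tsum_ext => s /=.
have hyx' : (y <= x)%N := hyx.
rewrite hyx' /= /sd /=.
case: ifP => hs; last by rewrite !mulr0.
rewrite cnt_cons2 // exprD.
by rewrite exprD; ring.
Qed.

Lemma boxB m n :
  boxsum m n (fun l => if sd l then q ^+ sumn l * (1 + t) ^+ cnt l else 0) = Bf m n.
Proof.
case: n => [|n]; first by rewrite /boxsum /= mulr1.
rewrite boxsumS /=; apply: eq_big_nat => x /andP[_ hx].
rewrite -(boxT n (hx : x <= m)%N) /boxsum -tsumZ; apply: tsum_ext => s /=.
case: ifP => _; last by rewrite mulr0.
by rewrite exprD !mulrA.
Qed.

Lemma Tf0 n : Tf n 0 = 1.
Proof. by elim: n => [|n IH] //=; rewrite big_nat1 expr0 mulr1 mul1r. Qed.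

Lemma B0n n : Bf 0 n = 1.
Proof. by case: n => [|n] //=; rewrite big_nat1 expr0 mul1r Tf0. Qed.

Lemma TB n x : (0 < x)%N -> Tf n x = Bf x n + t * Bf x.-1 n.
Proof.
case: x => [//|x] _ /=.
case: n => [|n] /=; first by rewrite expr1 mulr1 addrC.
rewrite !big_nat_recr //= eqxx /= expr0 mulr1.
rewrite (eq_big_nat _ _ (F2 := fun y => (1 + t) * (q ^+ y * Tf n y))); last first.
  move=> y /andP[_ hy]; rewrite (_ : (x.+1 != y) = true) ?expr1; last by rewrite neq_ltn ltnS (ltnW hy) orbT.
  by rewrite mulrAC mulrC.
rewrite -mulr_sumr mulrDl mul1r mulr_sumr.
rewrite gtn_eqF // expr1 -mulr_sumr; ring.
Qed.

Lemma Brec m n : Bf m.+1 n.+1 = Bf m n.+1 + q ^+ m.+1 * (Bf m.+1 n + t * Bf m n).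
Proof.
by rewrite /= big_nat_recr //= (TB n (ltn0Sn m)).
Qed.

End OSide.
Lemma sum_step (R : comRingType) (F : step -> R) :
  \sum_(x : step) F x = F East + F North + F NorthEast.
Proof.
rewrite (reindex ord_to_step) /=; last first.
  apply: onW_bij; exists step_to_ord => [i|x]; last exact: step_to_ordK.
  apply: val_inj; case: i => [[|[|[|i]]] hi] //=; rewrite /step_to_ord /= inordK //.
rewrite !big_ord_recr big_ord0 /= add0r.
by [].
Qed.

Definition sbeq (x y : step) := match x, y with
  | East, East | North, North | NorthEast, NorthEast => true | _, _ => false end.
Lemma stepeqE x y : (x == y) = sbeq x y.
Proof. by apply/eqP/idP => [->|]; [case: y | case: x; case: y]. Qed.

Definition e1 (p : seq step) := count (fun x => (x == East) || (x == NorthEast)) p.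
Definition e2 (p : seq step) := count (fun x => (x == North) || (x == NorthEast)) p.

Lemma e1_rcons p x : e1 (rcons p x) = (e1 p + ((x == East) || (x == NorthEast)))%N.
Proof. by rewrite /e1 -cats1 count_cat /= addn0. Qed.
Lemma e2_rcons p x : e2 (rcons p x) = (e2 p + ((x == North) || (x == NorthEast)))%N.
Proof. by rewrite /e2 -cats1 count_cat /= addn0. Qed.
Lemma dNE_rcons p x : dNE (rcons p x) = (dNE p + (x == NorthEast))%N.
Proof. by rewrite /dNE -cats1 count_cat /= addn0. Qed.

Lemma wt_rcons i p x : wt_from i (rcons p x) = (wt_from i p +
  match x with East => 0 | North => i + e1 p | NorthEast => (i + e1 p).+1 end)%N.
Proof.
elim: p i => [|y p IH] i /=; first by case: x => //=; rewrite /e1 /= ?addn0.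
case: y => /=; rewrite IH /e1 /=; case: x {IH} => /=; rewrite ?stepeqE /=; lia.
Qed.

Lemma size_e p : (size p <= e1 p + e2 p)%N.
Proof.
elim: p => [|y p] //=; rewrite /e1 /e2 /=.
by case: y => /=; rewrite ?stepeqE /=; move=> IH; lia.
Qed.

Section PSide.
Variable R : comRingType.
Variables q t : R.

Definition Gp m n (p : seq step) : R :=
  if (e1 p == m) && (e2 p == n) then t ^+ dNE p * q ^+ wt p else 0.
Definition Pk k m n := tsum k (Gp m n).

Lemma PSE m n : path_sum m n q t = \sum_(0 <= k < (m + n).+1) Pk k m n.
Proof.
rewrite /path_sum big_mkord; apply: eq_bigr => k _.
rewrite /Pk -tsumE big_mkcond; apply: eq_bigr => p _.
by rewrite /Gp /path_end xpair_eqE.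
Qed.

Lemma PkS k m n : Pk k.+1 m n =
  (if m is m'.+1 then Pk k m' n else 0) +
  (if n is n'.+1 then q ^+ m * Pk k m n' else 0) +
  (if m is m'.+1 then if n is n'.+1 then t * q ^+ m * Pk k m' n' else 0 else 0).
Proof.
rewrite /Pk tsum_rcons sum_step; congr (_ + _ + _).
- case: m => [|m].
    by apply: tsum0 => s _; rewrite /Gp e1_rcons !stepeqE /= addn1.
  apply: tsum_ext => s.
  by rewrite /Gp e1_rcons e2_rcons dNE_rcons /wt wt_rcons !stepeqE /= addn1 eqSS !addn0.
- case: n => [|n].
    by apply: tsum0 => s _; rewrite /Gp e2_rcons !stepeqE /= addn1 andbF.
  rewrite -tsumZ; apply: tsum_ext => s.
  rewrite /Gp e1_rcons e2_rcons dNE_rcons /wt wt_rcons !stepeqE /= addn1 eqSS !addn0.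
  case: ifP => [/andP[/eqP h1 _]|_]; last by rewrite mulr0.
  by rewrite add0n h1 exprD; ring.
- case: m => [|m].
    by apply: tsum0 => s _; rewrite /Gp e1_rcons !stepeqE /= addn1.
  case: n => [|n].
    by apply: tsum0 => s _; rewrite /Gp e2_rcons !stepeqE /= addn1 andbF.
  rewrite -tsumZ; apply: tsum_ext => s.
  rewrite /Gp e1_rcons e2_rcons dNE_rcons /wt wt_rcons !stepeqE /= !addn1 !eqSS.
  case: ifP => [/andP[/eqP h1 _]|_]; last by rewrite mulr0.
  by rewrite add0n h1 exprS exprD; ring.
Qed.


Lemma Pk_big k m n : (m + n < k)%N -> Pk k m n = 0.
Proof.
move=> hk; apply: tsum0 => s hs; rewrite /Gp; case: ifP => // /andP[/eqP h1 /eqP h2].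
exfalso; move: (size_e s) hk; rewrite hs h1 h2; lia.
Qed.

Lemma PSK m n K : (m + n < K)%N -> \sum_(0 <= k < K) Pk k m n = path_sum m n q t.
Proof.
move=> hK; rewrite PSE -(subnK hK).
elim: (K - (m + n).+1)%N => [|d IH]; first by rewrite add0n.
rewrite addSn big_nat_recr //= IH Pk_big ?addr0 //; lia.
Qed.

Lemma PS_S m n : path_sum m n q t =
  Pk 0 m n + \sum_(0 <= k < (m + n).+1) Pk k.+1 m n.
Proof. by rewrite -(PSK (K := (m + n).+2)) // big_nat_recl. Qed.

Lemma PS00 : path_sum 0 0 q t = 1.
Proof. by rewrite PSE big_nat1 /Pk /Gp /= mulr1. Qed.

Lemma PSm0 m : path_sum m.+1 0 q t = path_sum m 0 q t.
Proof.
rewrite PS_S {1}/Pk /Gp /= add0r -(PSK (K := (m.+1 + 0).+1)); last lia.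
by apply: eq_big_nat => k _; rewrite PkS !addr0.
Qed.

Lemma PS0n n : path_sum 0 n.+1 q t = path_sum 0 n q t.
Proof.
rewrite PS_S {1}/Pk /Gp /= add0r -(PSK (K := (0 + n.+1).+1)); last lia.
by apply: eq_big_nat => k _; rewrite PkS add0r addr0 expr0 mul1r.
Qed.

Lemma PSmn m n : path_sum m.+1 n.+1 q t =
  path_sum m n.+1 q t + q ^+ m.+1 * (path_sum m.+1 n q t + t * path_sum m n q t).
Proof.
rewrite PS_S {1}/Pk /Gp /= add0r.
rewrite (eq_big_nat _ _ (F2 := fun k => Pk k m n.+1 + q ^+ m.+1 * Pk k m.+1 n
   + t * q ^+ m.+1 * Pk k m n)); last by move=> k _; rewrite PkS.
rewrite !big_split /= -!mulr_sumr !PSK; try lia.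
ring.
Qed.

End PSide.

Lemma PS_B (R : comRingType) (q t : R) m n : path_sum m n q t = Bf q t m n.
Proof.
elim: m n => [|m IHm] n.
  rewrite B0n; elim: n => [|n IHn]; first exact: PS00.
  by rewrite PS0n.
elim: n => [|n IHn].
  rewrite PSm0 IHm; by [].
by rewrite PSmn Brec IHn !IHm.
Qed.

Theorem proposition2p1 (R : comRingType) (m n : nat) (q t : R) :
  overbinom m n q t = path_sum m n q t.
Proof. by rewrite PS_B overbinomE -boxB. Qed.
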